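(* Let $\mathcal V$ be a finite set of variables ranging over $\mathbb{N}$ and let $\Sigma=\mathcal V\cup\{\underline{x} : x\in\mathcal V\}$ (a fresh underlined copy of each variable). Every equation of one of the forms $x=c$ (with $c\in\mathbb{N}$), $x+y=z$, or $x\cdot y=z$, where $x,y,z\in\mathcal V$ are pairwise distinct variables, is encoded by some language $L\subseteq\Sigma^*$ that is definable by a regulated $\mathsf{C\text{-}RASP}$ formula.
   Context: $\mathsf{C\text{-}RASP}$ formulas over a finite alphabet $\Sigma$: $\phi ::= \sigma \mid \Diamond^{-}\phi \mid \Box^{-}\phi \mid \neg\phi \mid \phi_1\wedge\phi_2 \mid \sum_{t\in\mathcal{T}}\alpha_t t\sim k$, terms $t ::= \#[\phi] \mid c$, with $\sigma\in\Sigma$, $\alpha_t,k,c\in\mathbb{Z}$, ${\sim}\in\{<,\le,=,\ge,>\}$. Semantics at position $i$ of $w=w_1\cdots w_n$: $w,i\models\sigma$ iff $w_i=\sigma$; Boolean connectives as usual; $w,i\models\Diamond^{-}\phi$ iff $w,j\models\phi$ for some $j<i$; $w,i\models\Box^{-}\phi$ iff $w,j\models\phi$ for all $j\le i$; $\#[\phi]$ evaluates to $|\{j\in[1,i]: w,j\models\phi\}|$, $c$ to $c$, and comparisons are integer comparisons. $w\models\phi$ iff $w,|w|\models\phi$; $\phi$ defines $L(\phi)=\{w: w\models\phi\}$. A formula is regulated if no atomic formula $\sigma$ ($\sigma\in\Sigma$) occurs outside the scope of a counting operator $\#$. For $w\in\Sigma^*$ and $\sigma\in\Sigma$, $|w|_\sigma$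 is the number of occurrences of $\sigma$ in $w$. A language $L\subseteq\Sigma^*$ encodes an equation $\mathcal D$ over variables $x_1,\dots,x_m\in\mathcal V\subseteq\Sigma$ if (i) for every $w\in L$, the assignment $x_i\mapsto|w|_{x_i}$ satisfies $\mathcal D$, and (ii) for all $n_1,\dots,n_m\in\mathbb N$ satisfying $\mathcal D$ there is $w\in L$ with $|w|_{x_i}=n_i$ for all $i\in[m]$. *)

(* Defs.v *)
From mathcomp Require Import all_boot all_order all_algebra.
Set Implicit Arguments. Unset Strict Implicit. Unset Printing Implicit Defensive.
Import Order.TTheory GRing.Theory Num.Theory.

Inductive cmp := CLt | CLe | CEq | CGe | CGt.

Inductive cform (S : Type) :=
  | FAtom : S -> cform S
  | FDiaM : cform S -> cform S
  | FBoxM : cform S -> cform S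
  | FNeg  : cform S -> cform S
  | FAnd  : cform S -> cform S -> cform S
  | FCmp  : ctsum S -> cmp -> int -> cform S
with ctsum (S : Type) :=
  | TNil  : ctsum S
  | TCons : int -> cterm S -> ctsum S -> ctsum S
with cterm (S : Type) :=
  | TCount : cform S -> cterm S
  | TConst : int -> cterm S.

Definition cmp_eval (c : cmp) (a b : int) : bool :=
  match c with
  | CLt => (a < b)%R | CLe => (a <= b)%R | CEq => a == b
  | CGe => (b <= a)%R | CGt => (b < a)%R
  end.

Section Semantics.
Variable S : eqType.
Variable w : seq S.

(** positions are 1..size w; letter at position i is nth (i-1). *)
Definition letter_at (i : nat) : option S := nth None (map Some w) i.-1.

Fixpoint sat (i : nat) (f : cform S) {struct f} : bool :=
  match f with
  | FAtom s => (0 < i)%N && (letter_at i == Some s)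
  | FDiaM g => has (fun j => sat j g) (iota 1 i.-1)
  | FBoxM g => all (fun j => sat j g) (iota 1 i)
  | FNeg g => ~~ sat i g
  | FAnd g h => sat i g && sat i h
  | FCmp ts c k => cmp_eval c (tsum_eval i ts) k
  end
with tsum_eval (i : nat) (ts : ctsum S) {struct ts} : int :=
  match ts with
  | TNil => 0%R
  | TCons a t rest => (a * term_eval i t + tsum_eval i rest)%R
  end
with term_eval (i : nat) (t : cterm S) {struct t} : int :=
  match t with
  | TCount g => (count (fun j => sat j g) (iota 1 i))%:Z
  | TConst c => c
  end.

End Semantics.

Definition lang (S : eqType) (f : cform S) : seq S -> Prop :=
  fun w => sat w (size w) f.

Fixpoint regulated (S : Type) (f : cform S) : bool :=
  match f with
  | FAtom _ => false
  | FDiaM g => regulated g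
  | FBoxM g => regulated g
  | FNeg g => regulated g
  | FAnd g h => regulated g && regulated h
  | FCmp _ _ _ => true
  end.

Inductive nequation (V : Type) :=
  | EqConst : V -> nat -> nequation V
  | EqAdd : V -> V -> V -> nequation V
  | EqMul : V -> V -> V -> nequation V.

Definition eqn_sat (V : Type) (a : V -> nat) (D : nequation V) : Prop :=
  match D with
  | EqConst x c => a x = c
  | EqAdd x y z => a x + a y = a z
  | EqMul x y z => a x * a y = a z
  end.

Definition eqn_vars (V : Type) (D : nequation V) : seq V :=
  match D with
  | EqConst x _ => [:: x]
  | EqAdd x y z => [:: x; y; z]
  | EqMul x y z => [:: x; y; z]
  end.

Definition eqn_wf (V : eqType) (D : nequation V) : bool := uniq (eqn_vars D).

(** Alphabet Sigma = V (inl) together with underlined copies (inr). *)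
Definition Alph (V : finType) : finType := (V + V)%type.

Definition encodes (V : finType) (L : seq (Alph V) -> Prop) (D : nequation V) : Prop :=
  (forall w, L w -> eqn_sat (fun x => count_mem (inl x : Alph V) w) D) /\
  (forall n : V -> nat, eqn_sat n D ->
     exists2 w, L w & forall x, x \in eqn_vars D -> count_mem (inl x : Alph V) w = n x).

(* Main.v *)
Require Import Defs.
From mathcomp Require Import all_boot all_order all_algebra zify.
Set Implicit Arguments. Unset Strict Implicit.
Import Order.TTheory GRing.Theory Num.Theory.

Lemma letter_atS (S : eqType) (w : seq S) (x0 : S) i : i < size w -> letter_at w i.+1 = Some (nth x0 w i).
Proof. by move=> h; rewrite /letter_at /= (nth_map x0). Qed.

Lemma cntE (S : eqType) (w : seq S) (x0 u : S) j : j <= size w ->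
  count (fun k => sat w k (FAtom u)) (iota 1 j) = count_mem u (take j w).
Proof.
elim: j => [|j IH] hj; first by rewrite take0.
rewrite -[j.+1]addn1 iotaD count_cat IH ?(ltnW hj) //.
rewrite addn1 (take_nth x0 hj) -cats1 count_cat /= add1n (letter_atS x0 hj).
by rewrite addn0.
Qed.

Lemma sat_atom (S : eqType) (w : seq S) (x0 u : S) i : i < size w ->
  sat w i.+1 (FAtom u) = (nth x0 w i == u).
Proof. by move=> h; rewrite /= (letter_atS x0 h). Qed.

Definition lin2 (S : Type) (u v : S) (k : int) : cform S :=
  FCmp (TCons 1 (TCount (FAtom u)) (TCons (-1) (TCount (FAtom v)) (TNil S))) CEq k.
Definition lin3 (S : Type) (u v t : S) (k : int) : cform S :=
  FCmp (TCons 1 (TCount (FAtom u)) (TCons (-1) (TCount (FAtom v))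
     (TCons (-1) (TCount (FAtom t)) (TNil S)))) CEq k.
Definition ge1 (S : Type) (u : S) : cform S :=
  FCmp (TCons 1 (TCount (FAtom u)) (TNil S)) CGe 1.
Definition eq0 (S : Type) (u : S) : cform S :=
  FCmp (TCons 1 (TCount (FAtom u)) (TNil S)) CEq 0.
Definition imp (S : Type) (a b : cform S) : cform S := FNeg (FAnd a (FNeg b)).

Lemma sat_lin2 (S : eqType) (w : seq S) (x0 u v : S) k j : j <= size w ->
  sat w j (lin2 u v k) = ((count_mem u (take j w))%:Z - (count_mem v (take j w))%:Z == k)%R.
Proof. by move=> h; rewrite /= !(cntE x0) // mul1r mulN1r addr0. Qed.

Lemma sat_lin3 (S : eqType) (w : seq S) (x0 u v t : S) k j : j <= size w ->
  sat w j (lin3 u v t k) = ((count_mem u (take j w))%:Z - (count_mem v (take j w))%:Z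
        - (count_mem t (take j w))%:Z == k)%R.
Proof. by move=> h; rewrite /= !(cntE x0) // mul1r !mulN1r addr0 addrA. Qed.

Lemma sat_ge1 (S : eqType) (w : seq S) (x0 u : S) j : j <= size w ->
  sat w j (ge1 u) = (0 < count_mem u (take j w)).
Proof. by move=> h; rewrite /= !(cntE x0) // mul1r addr0. Qed.

Lemma sat_eq0 (S : eqType) (w : seq S) (x0 u : S) j : j <= size w ->
  sat w j (eq0 u) = (count_mem u (take j w) == 0).
Proof. by move=> h; rewrite /= !(cntE x0) // mul1r addr0. Qed.

Lemma zm0 (a b : nat) : ((a%:Z - b%:Z == 0)%R) = (a == b).
Proof. by apply/eqP/eqP; lia. Qed.
Lemma zm1 (a b : nat) : ((a%:Z - b%:Z == -1)%R) = (a + 1 == b).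
Proof. by apply/eqP/eqP; lia. Qed.
Lemma zadd (a b c : nat) : ((a%:Z + (b%:Z - c%:Z) == 0)%R) = (a + b == c).
Proof. by apply/eqP/eqP; lia. Qed.
Lemma zm3 (a b c : nat) : ((a%:Z - b%:Z - c%:Z == 0)%R) = (a == b + c).
Proof. by apply/eqP/eqP; lia. Qed.

Definition psi (S : Type) (X Y Z R Q : S) : cform S :=
  FAnd (imp (FAtom X) (eq0 Y))
 (FAnd (imp (FAtom Y) (FAnd (lin2 Z Q 0) (lin2 R Y (-1))))
 (FAnd (imp (FAtom Z) (lin2 R Y (-1)))
 (FAnd (imp (FAtom R) (FAnd (lin3 Z Q X 0) (lin2 R Y 0)))
       (imp (FAtom Q) (FAnd (lin2 R Y 0) (ge1 Y)))))).

Definition PP (S : eqType) (X Y Z R Q : S) (t : seq S) (c : S) : bool :=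
  [&& ~~ ((c == X) && ~~ (count_mem Y t == 0)),
      ~~ ((c == Y) && ~~ ((count_mem Z t == count_mem Q t) && (count_mem R t + 1 == count_mem Y t))),
      ~~ ((c == Z) && ~~ (count_mem R t + 1 == count_mem Y t)),
      ~~ ((c == R) && ~~ ((count_mem Z t == count_mem Q t + count_mem X t) && (count_mem R t == count_mem Y t)))
    & ~~ ((c == Q) && ~~ ((count_mem R t == count_mem Y t) && (0 < count_mem Y t)))].

Lemma sat_psi (S : eqType) (X Y Z R Q : S) (w : seq S) (x0 : S) i : i < size w ->
  sat w i.+1 (psi X Y Z R Q) = PP X Y Z R Q (take i.+1 w) (nth x0 w i).
Proof.
move=> h.
have E1 : forall f g, sat w i.+1 (FAnd f g) = sat w i.+1 f && sat w i.+1 g by [].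
have E2 : forall f g, sat w i.+1 (imp f g) = ~~ (sat w i.+1 f && ~~ sat w i.+1 g) by [].
rewrite /psi !E1 !E2 !E1 !(sat_atom x0) // !(sat_lin2 x0) // !(sat_lin3 x0) // (sat_ge1 x0) //
  (sat_eq0 x0) // !zm0 !zm1 zm3.
by [].
Qed.

Definition Good (S : eqType) (X Y Z R Q : S) (x0 : S) (w : seq S) : bool :=
  all (fun i => PP X Y Z R Q (take i.+1 w) (nth x0 w i)) (iota 0 (size w)).

Lemma Good_rcons (S : eqType) (X Y Z R Q : S) (x0 : S) s c :
  Good X Y Z R Q x0 (rcons s c) = Good X Y Z R Q x0 s && PP X Y Z R Q (rcons s c) c.
Proof.
rewrite /Good size_rcons -addn1 iotaD all_cat /= andbT add0n.
rewrite take_oversize ?size_rcons // nth_rcons ltnn eqxx; congr (_ && _).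
apply: eq_in_all => i; rewrite mem_iota add0n => /andP [_ hi].
by rewrite -cats1 takel_cat // nth_cat hi.
Qed.

Definition fmul (S : Type) (X Y Z R Q : S) : cform S :=
  FAnd (FCmp (TCons 1 (TCount (FNeg (psi X Y Z R Q))) (TNil S)) CEq 0)
       (FAnd (lin2 Z Q 0) (lin2 R Y 0)).

Lemma lang_mul (S : eqType) (X Y Z R Q : S) (x0 : S) w :
  lang (fmul X Y Z R Q) w =
  [&& Good X Y Z R Q x0 w, count_mem Z w == count_mem Q w & count_mem R w == count_mem Y w].
Proof.
rewrite /lang.
have E1 : forall f g, sat w (size w) (FAnd f g) = sat w (size w) f && sat w (size w) g by [].
rewrite /fmul !E1 !(sat_lin2 x0) // take_size !zm0; congr (_ && _).
rewrite /= mul1r addr0.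
have -> : forall n : nat, ((n%:Z == 0)%R) = (n == 0) by [].
rewrite -leqn0 leqNgt -has_count -all_predC.
rewrite -[1]/(1+0) iotaDl all_map /Good; apply: eq_in_all => i.
rewrite mem_iota add0n => /andP [_ hi].
rewrite -(sat_psi _ _ _ _ _ x0 hi); exact: negbK.
Qed.

Lemma cm_rcons (S : eqType) (s : seq S) (c u : S) :
  count_mem u (rcons s c) = count_mem u s + (c == u).
Proof. by rewrite -cats1 count_cat /= addn0. Qed.

Lemma eqLL (V : finType) (a b : V) : (inl a == inl b :> Alph V) = (a == b).
Proof. by []. Qed.
Lemma eqRR (V : finType) (a b : V) : (inr a == inr b :> Alph V) = (a == b).
Proof. by []. Qed.

Definition Inv (V : finType) (x y z : V) (w : seq (Alph V)) : Prop :=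
  let cX := count_mem (inl x : Alph V) w in
  let cY := count_mem (inl y : Alph V) w in
  let cZ := count_mem (inl z : Alph V) w in
  let cR := count_mem (inr z : Alph V) w in
  let cQ := count_mem (inr y : Alph V) w in
  (cY = 0 /\ cR = 0 /\ cZ = 0 /\ cQ = 0) \/
  (0 < cY /\ cR + 1 = cY /\ cQ = cX * cR) \/
  (0 < cY /\ cR = cY /\ cZ = cX * cR).

Lemma inv_mul (V : finType) (x y z : V) (x0 : Alph V) :
  x != y -> x != z -> y != z -> forall w,
  Good (inl x) (inl y) (inl z) (inr z) (inr y) x0 w -> Inv x y z w.
Proof.
move=> /negbTE hxy /negbTE hxz /negbTE hyz.
have hyx : (y == x) = false by rewrite eq_sym.
have hzx : (z == x) = false by rewrite eq_sym.
have hzy : (z == y) = false by rewrite eq_sym.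
elim/last_ind => [|s c IH]; first by rewrite /Inv; left.
rewrite Good_rcons => /andP [/IH {}IH hP].
move: hP; rewrite /PP /Inv !cm_rcons.
move: IH; rewrite /Inv.
move: (count_mem (inl x) s) (count_mem (inl y) s) (count_mem (inl z) s)
  (count_mem (inr z) s) (count_mem (inr y) s) => cx cy cz cr cq.
case: c => c /=; rewrite ?eqLL ?eqRR.
- have [?|nx] := eqVneq c x; try subst c; rewrite ?eqxx ?hxy ?hxz /=.
    move=> H1 H2; nia.
  have [?|ny] := eqVneq c y; try subst c; rewrite ?eqxx ?hyx ?hyz /=.
    move=> H1 H2; nia.
  have [?|nz] := eqVneq c z; try subst c; rewrite ?eqxx ?hzx ?hzy /=.
    move=> H1 H2; nia.
  rewrite ?(negbTE nx) ?(negbTE ny) ?(negbTE nz) /= !addn0 => H1 _; exact: H1.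
- have [?|nz] := eqVneq c z; try subst c; rewrite ?eqxx ?hzx ?hzy /=.
    move=> H1 H2; nia.
  have [?|ny] := eqVneq c y; try subst c; rewrite ?eqxx ?hyx ?hyz /=.
    move=> H1 H2; nia.
  rewrite ?(negbTE nx) ?(negbTE ny) ?(negbTE nz) /= !addn0 => H1 _; exact: H1.
Qed.

Lemma Good_cat_nseq (S : eqType) (X Y Z R Q x0 : S) s c n :
  Good X Y Z R Q x0 s ->
  (forall i, i < n -> PP X Y Z R Q (rcons (s ++ nseq i c) c) c) ->
  Good X Y Z R Q x0 (s ++ nseq n c).
Proof.
move=> hs; elim: n => [|n IH] h; first by rewrite cats0.
have -> : s ++ nseq n.+1 c = rcons (s ++ nseq n c) c.
  by rewrite -[n.+1]addn1 nseqD catA cats1.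
rewrite Good_rcons IH ?h // => i hi; apply: h; exact: ltnW.
Qed.

Definition blk (V : finType) (y z : V) (a : nat) : seq (Alph V) :=
  rcons (rcons [:: inl y] (inl z) ++ nseq a.-1 (inl z)) (inr z) ++ nseq a (inr y).

Definition mw (V : finType) (x y z : V) (a k : nat) : seq (Alph V) :=
  iter k (fun s => s ++ [:: inl y] ++ nseq a (inl z) ++ [:: inr z] ++ nseq a (inr y))
     (nseq a (inl x)).

Lemma mw_good (V : finType) (x y z : V) (x0 : Alph V) :
  x != y -> x != z -> y != z -> forall a k,
  let w := mw x y z a k in
  Good (inl x) (inl y) (inl z) (inr z) (inr y) x0 w /\
  [/\ count_mem (inl x : Alph V) w = a, count_mem (inl y : Alph V) w = k,
      count_mem (inl z : Alph V) w = a * k, count_mem (inr z : Alph V) w = k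
    & count_mem (inr y : Alph V) w = a * k].
Proof.
move=> /negbTE hxy /negbTE hxz /negbTE hyz.
have hyx : (y == x) = false by rewrite eq_sym.
have hzx : (z == x) = false by rewrite eq_sym.
have hzy : (z == y) = false by rewrite eq_sym.
move=> a; elim => [|k IH].
  rewrite /= !count_nseq /= ?eqLL ?eqRR ?eqxx ?hxy ?hxz ?hyx ?hzx ?hzy ?hyz /= muln0 !mul0n.
  split; last by rewrite mul1n. rewrite -[nseq a _]cat0s; apply: Good_cat_nseq => // i _.
  by rewrite /PP !(cm_rcons, count_cat, count_nseq) /= ?eqLL ?eqRR ?eqxx ?hxy ?hxz ?hyx ?hzx ?hzy ?hyz.
have -> : mw x y z a k.+1 =
  rcons (rcons (mw x y z a k) (inl y) ++ nseq a (inl z)) (inr z) ++ nseq a (inr y).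
  by rewrite /= -!cats1 -!catA.
move: IH; set s := mw x y z a k => -[G [hX hY hZ hR hQ]].
rewrite /= !(cm_rcons, count_cat, count_nseq) /=
  ?eqLL ?eqRR ?eqxx ?hxy ?hxz ?hyx ?hzx ?hzy ?hyz ?hX ?hY ?hZ ?hR ?hQ /=.
split; last by split; nia.
apply: Good_cat_nseq; last first.
  move=> i hi; rewrite /PP !(cm_rcons, count_cat, count_nseq) /=
    ?eqLL ?eqRR ?eqxx ?hxy ?hxz ?hyx ?hzx ?hzy ?hyz ?hX ?hY ?hZ ?hR ?hQ /=; nia.
rewrite Good_rcons; apply/andP; split; last first.
  rewrite /PP !(cm_rcons, count_cat, count_nseq) /=
    ?eqLL ?eqRR ?eqxx ?hxy ?hxz ?hyx ?hzx ?hzy ?hyz ?hX ?hY ?hZ ?hR ?hQ /=; nia.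
apply: Good_cat_nseq; last first.
  move=> i hi; rewrite /PP !(cm_rcons, count_cat, count_nseq) /=
    ?eqLL ?eqRR ?eqxx ?hxy ?hxz ?hyx ?hzx ?hzy ?hyz ?hX ?hY ?hZ ?hR ?hQ /=; nia.
rewrite Good_rcons G /=.
rewrite /PP !cm_rcons /= ?eqLL ?eqRR ?eqxx ?hxy ?hxz ?hyx ?hzx ?hzy ?hyz ?hX ?hY ?hZ ?hR ?hQ /=; nia.
Qed.

Theorem lemma3p4 (V : finType) (D : nequation V) :
  eqn_wf D ->
  exists f : cform (Alph V), regulated f /\ encodes (lang f) D.
Proof.
case: D => [x c|x y z|x y z]; rewrite /eqn_wf /= ?inE.
- move=> _.
  exists (FCmp (TCons 1 (TCount (FAtom (inl x : Alph V))) (TNil _)) CEq c%:Z); split => //.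
  have L : forall w, lang (FCmp (TCons 1 (TCount (FAtom (inl x : Alph V))) (TNil _)) CEq c%:Z) w
      = (count_mem (inl x : Alph V) w == c).
    move=> w; rewrite /lang /= (cntE (inl x)) // take_size mul1r addr0.
    by [].
  split.
  + by move=> w; rewrite L => /eqP.
  + move=> n /= hn; exists (nseq c (inl x)); first by rewrite L count_nseq /= eqxx mul1n.
    by move=> u; rewrite inE => /eqP ->; rewrite count_nseq /= eqxx mul1n.
- rewrite negb_or andbT => /andP [/andP [hxy hxz] hyz].
  move/negbTE: hxy => hxy; move/negbTE: hxz => hxz; move/negbTE: hyz => hyz.
  have hyx : (y == x) = false by rewrite eq_sym.
  have hzx : (z == x) = false by rewrite eq_sym.
  have hzy : (z == y) = false by rewrite eq_sym.
  set f := FCmp (TCons 1 (TCount (FAtom (inl x : Alph V)))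
             (TCons 1 (TCount (FAtom (inl y : Alph V)))
             (TCons (-1) (TCount (FAtom (inl z : Alph V))) (TNil _)))) CEq 0.
  exists f; split => //.
  have L : forall w, lang f w = (count_mem (inl x : Alph V) w + count_mem (inl y : Alph V) w
                               == count_mem (inl z : Alph V) w).
    move=> w; rewrite /lang /f /= !(cntE (inl x)) // take_size !mul1r mulN1r addr0.
    by rewrite zadd.
  split.
  + by move=> w; rewrite L => /eqP.
  + move=> n /= hn.
    exists (nseq (n x) (inl x) ++ nseq (n y) (inl y) ++ nseq (n z) (inl z)).
      by rewrite L !count_cat !count_nseq /= ?eqLL ?eqxx ?hxy ?hxz ?hyx ?hzx ?hzy ?hyz; apply/eqP; lia.
    move=> u; rewrite !inE => /orP [/eqP ->|/orP [/eqP ->|/eqP ->]];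
      rewrite !count_cat !count_nseq /= ?eqLL ?eqxx ?hxy ?hxz ?hyx ?hzx ?hzy ?hyz; lia.
- rewrite negb_or andbT => /andP [/andP [hxy hxz] hyz].
  exists (fmul (inl x) (inl y) (inl z) (inr z) (inr y)); split => //.
  split.
  + move=> w; rewrite (lang_mul _ _ _ _ _ (inl x)) => /and3P [G /eqP e1 /eqP e2] /=.
    have := inv_mul hxy hxz hyz G; rewrite /Inv /=; move: e1 e2.
    move: (count_mem (inl x : Alph V) w) (count_mem (inl y : Alph V) w)
      (count_mem (inl z : Alph V) w) (count_mem (inr z : Alph V) w)
      (count_mem (inr y : Alph V) w) => cx cy cz cr cq.
    nia.
  + move=> n /= hn.
    have [G [hX hY hZ hR hQ]] := mw_good (inl x) hxy hxz hyz (n x) (n y).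
    exists (mw x y z (n x) (n y)).
      by rewrite (lang_mul _ _ _ _ _ (inl x)) G hZ hQ hR hY !eqxx.
    move=> u; rewrite !inE => /orP [/eqP ->|/orP [/eqP ->|/eqP ->]] //.
    by rewrite hZ.
Qed.
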